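(* For every integer partition $\lambda$ there exists a unique elementary interval bipartition $(\mathbf L,\mathbf R)$ such that $\lambda=\boldsymbol\lambda(\mathbf L,\mathbf R)$.
   Context: A bipartition of a set $\mathbf A$ is an ordered pair $(\mathbf L,\mathbf R)$ with $\mathbf L\cup\mathbf R=\mathbf A$, $\mathbf L\cap\mathbf R=\varnothing$. An interval bipartition is a bipartition of an interval $\{i,\dots,j\}$ of $\mathbb{N}^*$ (or of $\varnothing$); it is elementary if either $\mathbf L=\mathbf R=\varnothing$, or $1\in\mathbf L$ and $\max(\mathbf L\cup\mathbf R)\in\mathbf R$. For $\mathbf L=\{\ell_1<\dots<\ell_p\}$ nonempty, $\boldsymbol\lambda(\mathbf L,\mathbf R)$ is the integer partition with $\boldsymbol\lambda(\mathbf L,\mathbf R)_i=\#\{r\in\mathbf R:\ell_i<r\}$ (zero parts discarded); if $\mathbf L=\varnothing$, $\boldsymbol\lambda(\mathbf L,\mathbf R)=(0)$. The empty partition is $(0)$. *)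

(* Defs.v *)
From mathcomp Require Import all_boot.
From mathcomp Require Import finmap.
Set Implicit Arguments. Unset Strict Implicit. Unset Printing Implicit Defensive.
Local Open Scope fset_scope.

(* An integer partition: a weakly decreasing finite sequence of positive
   integers. The empty partition "(0)" is represented by [::]. *)
Definition is_partition (la : seq nat) : bool :=
  sorted geq la && all (fun x => 0 < x) la.

Definition is_interval (A : {fset nat}) : Prop :=
  A = fset0 \/ exists i j, 1 <= i /\ i <= j /\ A = [fset k | k in iota i (j - i).+1].

Definition interval_bipartition (L R : {fset nat}) : Prop :=
  L `&` R = fset0 /\ is_interval (L `|` R).

Definition elementary (L R : {fset nat}) : Prop :=
  interval_bipartition L R /\
  ((L = fset0 /\ R = fset0) \/
   (1 \in L /\ (\max_(x <- enum_fset (L `|` R)) x) \in R)).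

Definition lambdaLR (L R : {fset nat}) : seq nat :=
  filter (fun x => 0 < x)
    (map (fun l => count (fun r => l < r) (enum_fset R)) (sort leq (enum_fset L))).

(* Main.v *)
Require Import Defs.
From mathcomp Require Import all_boot.
From mathcomp Require Import finmap.
From mathcomp Require Import zify.
Local Open Scope fset_scope.

Lemma memE (A : {fset nat}) x : (x \in enum_fset A) = (x \in A).
Proof. by []. Qed.

Lemma count_gt_iota l n : count (fun x => l < x) (iota 1 n) = n - l.
Proof.
elim: n => [|n IH]; first by rewrite sub0n.
have E : iota 1 n.+1 = iota 1 n ++ [:: n.+1].
  by rewrite -(addn1 n) iotaD addnC.
rewrite E count_cat IH /=.
case: ltnP => h /=; lia.
Qed.

Lemma count_sorted_nth s i : sorted ltn s -> i < size s ->
  count (fun x => nth 0 s i < x) s = size s - i.+1.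
Proof.
elim: s i => [//|a t IH] i /= Hp Hi.
have Ha := order_path_min ltn_trans Hp.
have Ht : sorted ltn t by apply: path_sorted Hp.
case: i Hi => [|i] Hi /=.
  rewrite ltnn add0n subSS subn0 -(count_predT t).
  by apply: eq_in_count => x xt; rewrite (allP Ha x xt).
rewrite IH //. have : a < nth 0 t i by apply: (allP Ha); apply: mem_nth.
by move=> h; rewrite ltnNge (ltnW h).
Qed.

Lemma key (L R : {fset nat}) n (s : seq nat) :
 perm_eq s (enum_fset L) -> sorted leq s ->
 (forall x, (x \in L) || (x \in R) = (x \in iota 1 n)) ->
 (forall x, x \in L -> x \notin R) -> n \in R ->
 size (lambdaLR L R) = size s /\
 forall i, i < size s ->
   (nth 0 (lambdaLR L R) i + (size s - i.+1) = n - nth 0 s i)%N.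
Proof.
move=> Hperm Hsle HU HD HnR.
have Hsu : uniq s by rewrite (perm_uniq Hperm) fset_uniq.
have Hsort : sorted ltn s by rewrite ltn_sorted_uniq_leq Hsu Hsle.
have HsL x : (x \in s) = (x \in L) by rewrite (perm_mem Hperm).
have Es : sort leq (enum_fset L) = s.
  apply: (sorted_eq leq_trans anti_leq) => //; first by apply: sort_sorted; exact: leq_total.
  apply: (perm_trans (permEl (perm_sort leq _))).
  by rewrite perm_sym.
have Hcnt l : (count (fun x => l < x) (enum_fset L) + count (fun x => l < x) (enum_fset R) = n - l)%N.
  rewrite -count_cat -(count_gt_iota l n).
  have Hp : perm_eq (enum_fset L ++ enum_fset R) (iota 1 n).
    apply: uniq_perm; last by move=> x; rewrite mem_cat -HU.
      rewrite cat_uniq !fset_uniq andbT /=.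
      apply/hasPn => x xR; apply/negP => xL. by move: (HD x xL); rewrite xR.
    exact: iota_uniq.
  exact: (permP Hp).
have Hpos l : l \in L -> 0 < count (fun x => l < x) (enum_fset R).
  move=> lL; rewrite -has_count; apply/hasP; exists n => //.
  have : l \in iota 1 n by rewrite -HU lL.
  rewrite mem_iota => /andP[_]. rewrite add1n ltnS leq_eqVlt => /orP[/eqP E|//].
  by move: (HD _ lL); rewrite E HnR.
have Hlam : lambdaLR L R = map (fun l => count (fun r => l < r) (enum_fset R)) s.
  rewrite /lambdaLR Es; apply/all_filterP; rewrite all_map; apply/allP => l.
  by rewrite HsL => /Hpos.
split; first by rewrite Hlam size_map.
move=> i Hi. rewrite Hlam (nth_map 0) // -(count_sorted_nth _ _ Hsort Hi).
have := Hcnt (nth 0 s i).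
rewrite -(permP Hperm).
by rewrite addnC.
Qed.

Lemma elem_ne (L R : {fset nat}) : elementary L R -> 1 \in L ->
  exists n, [/\ (forall x, (x \in L) || (x \in R) = (x \in iota 1 n)),
    (forall x, x \in L -> x \notin R) & n \in R].
Proof.
case=> [[HI Hint] [[L0 R0]|[H1 Hmax]]] H1'; first by rewrite L0 in_fset0 in H1'.
case: Hint => [E|[i [j [Hi [Hij E]]]]].
  by have := in_fsetU L R 1; rewrite E H1' in_fset0.
have Hm x : (x \in L) || (x \in R) = (x \in iota i (j - i).+1) by rewrite -in_fsetU E in_fset.
have Hi1 : i = 1.
  have := Hm 1; rewrite H1' mem_iota => /esym /andP[h _]; lia.
subst i.
have Hj : (j - 1).+1 = j by lia.
rewrite Hj in Hm.
have HD x : x \in L -> x \notin R.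
  move=> xL; apply/negP => xR.
  by have := in_fsetI L R x; rewrite HI xL xR in_fset0.
exists j; split => //.
suff <- : (\max_(x <- enum_fset (L `|` R)) x)%N = j by [].
apply/eqP; rewrite eqn_leq; apply/andP; split.
  apply/bigmax_leqP_seq => x; rewrite memE in_fsetU Hm mem_iota => /andP[_ h] _; lia.
apply: (leq_bigmax_seq (F := id)) => //.
by rewrite memE in_fsetU Hm mem_iota; apply/andP; split; lia.
Qed.

Lemma head1 (s : seq nat) : sorted leq s -> 1 \in s -> (forall x, x \in s -> 1 <= x) ->
  nth 0 s 0 = 1.
Proof.
case: s => [//|a t] /= Hp; rewrite in_cons => /orP[/eqP->//|h] Hge.
have := allP (order_path_min leq_trans Hp) 1 h; have := Hge a (mem_head _ _).
rewrite /=; lia.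
Qed.

Lemma memR (L R : {fset nat}) n :
 (forall x, (x \in L) || (x \in R) = (x \in iota 1 n)) ->
 (forall x, x \in L -> x \notin R) ->
 forall x, (x \in R) = (x \in iota 1 n) && (x \notin L).
Proof.
move=> HU HD x; rewrite -HU; case xL: (x \in L) => /=; last by rewrite andbT.
by rewrite (negbTE (HD x xL)).
Qed.

Lemma data (L R : {fset nat}) : elementary L R -> 1 \in L ->
  exists n, [/\ (forall x, (x \in L) || (x \in R) = (x \in iota 1 n)),
    (forall x, x \in L -> x \notin R), n \in R & 1 <= n] /\ [/\
    (forall x, x \in sort leq (enum_fset L) -> 1 <= x <= n),
    0 < size (sort leq (enum_fset L)) & nth 0 (sort leq (enum_fset L)) 0 = 1].
Proof.
move=> He H1; have [n [HU HD HnR]] := elem_ne _ _ He H1.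
have Hb x : x \in sort leq (enum_fset L) -> 1 <= x <= n.
  rewrite mem_sort memE => xL; have := HU x; rewrite xL /= mem_iota.
  move=> /esym /andP[a b]; apply/andP; split => //; lia.
have H1s : 1 \in sort leq (enum_fset L) by rewrite mem_sort.
exists n; split; split => //.
- have := HU n; rewrite HnR orbT mem_iota => /esym /andP[] //.
- by case: (sort leq _) H1s.
- apply: head1 => //; first by apply: sort_sorted; exact: leq_total.
  by move=> x /Hb /andP[].
Qed.

Lemma uniq_ne L R L' R' : elementary L R -> elementary L' R' -> 1 \in L -> 1 \in L' ->
  lambdaLR L R = lambdaLR L' R' -> L = L' /\ R = R'.
Proof.
move=> He He' H1 H1' Hl.
have [n [[HU HD HnR Hn] [Hb Hsz Hs0]]] := data _ _ He H1.
have [n' [[HU' HD' HnR' Hn'] [Hb' Hsz' Hs0']]] := data _ _ He' H1'.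
have Hss : sorted leq (sort leq (enum_fset L)) by apply: sort_sorted; exact: leq_total.
have Hss' : sorted leq (sort leq (enum_fset L')) by apply: sort_sorted; exact: leq_total.
have [K1 K2] := key _ _ _ _ (permEl (perm_sort leq _)) Hss HU HD HnR.
have [K1' K2'] := key _ _ _ _ (permEl (perm_sort leq _)) Hss' HU' HD' HnR'.
set s := sort leq (enum_fset L) in Hb Hsz Hs0 K1 K2.
set s' := sort leq (enum_fset L') in Hb' Hsz' Hs0' K1' K2'.
have Hk : size s = size s' by rewrite -K1 -K1' Hl.
have Enn : n = n'.
  have := K2 0 Hsz; have := K2' 0 Hsz'; rewrite Hs0 Hs0' Hl Hk; lia.
subst n'.
have Es : s = s'.
  apply: (eq_from_nth (x0 := 0)) => // i Hi.
  have := K2 i Hi; have Hi' := Hi; rewrite Hk in Hi'; have := K2' i Hi'.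
  rewrite Hl Hk.
  have := Hb _ (mem_nth 0 Hi); have := Hb' _ (mem_nth 0 Hi'); move=> /andP[a b] /andP[c d]; move: (nth 0 s' i) (nth 0 s i) a b c d => u v a b c d. lia.
have EL : L = L'.
  apply/fsetP => x; by rewrite -!memE -(mem_sort leq) -/s Es mem_sort.
split => //; apply/fsetP => x; rewrite (memR _ _ _ HU HD) (memR _ _ _ HU' HD') EL //.
Qed.

Lemma maxU (U : {fset nat}) n : (forall x, (x \in U) = (x \in iota 1 n)) -> 1 <= n ->
  (\max_(x <- enum_fset U) x)%N = n.
Proof.
move=> Hm Hn; apply/eqP; rewrite eqn_leq; apply/andP; split.
  apply/bigmax_leqP_seq => x; rewrite memE Hm mem_iota => /andP[_ h] _; lia.
apply: (leq_bigmax_seq (F := id)) => //.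
by rewrite memE Hm mem_iota; apply/andP; split; lia.
Qed.

Lemma lam0 R : lambdaLR fset0 R = [::].
Proof. rewrite /lambdaLR; have -> : enum_fset (fset0 : {fset nat}) = [::] by []. by []. Qed.

Lemma exist_ne a t : is_partition (a :: t) -> exists L R,
  [/\ elementary L R, 1 \in L & lambdaLR L R = a :: t].
Proof.
move=> /andP[Hs Hpos].
set la := a :: t; set k := size la; set n := (a + k)%N.
have Hgeq_tr : transitive geq by move=> x y z h1 h2; apply: leq_trans h2 h1.
have Hla0 i : i < k -> nth 0 la i <= a.
  move=> Hi; have := @sorted_leq_nth _ geq Hgeq_tr leqnn 0 la Hs 0 i.
  by apply => //; rewrite inE //=.
have Hla1 i : i < k -> 1 <= nth 0 la i by move=> Hi; apply: (allP Hpos); apply: mem_nth.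
have HlaS i : i.+1 < k -> nth 0 la i.+1 <= nth 0 la i.
  by move=> Hi; move/sortedP: Hs => /(_ 0 i Hi).
set g := fun i => (a + i.+1 - nth 0 la i)%N.
set s := map g (iota 0 k).
have Hsz : size s = k by rewrite size_map size_iota.
have Hns i : i < k -> nth 0 s i = g i by move=> Hi; rewrite (nth_map 0) ?size_iota // nth_iota.
have Hgb i : i < k -> 1 <= g i < n.
  move=> Hi; have := Hla0 i Hi; have := Hla1 i Hi; rewrite /g /n; lia.
have Hsl : sorted ltn s.
  apply/(sortedP 0) => i; rewrite Hsz => Hi; rewrite !Hns //; last by lia.
  have := HlaS i Hi; have := Hla0 i (ltnW Hi); rewrite /g; lia.
have Hsu : uniq s by move: Hsl; rewrite ltn_sorted_uniq_leq => /andP[].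
have Hsle : sorted leq s by move: Hsl; rewrite ltn_sorted_uniq_leq => /andP[].
have Hsb x : x \in s -> 1 <= x < n.
  by move=> /(nthP 0) [i]; rewrite Hsz => Hi <-; rewrite Hns //; apply: Hgb.
set L : {fset nat} := [fset x | x in s].
set R : {fset nat} := [fset x | x in [seq x <- iota 1 n | x \notin s]].
have HL x : (x \in L) = (x \in s) by rewrite in_fset.
have HR x : (x \in R) = (x \in iota 1 n) && (x \notin s) by rewrite in_fset mem_filter andbC.
have HU x : (x \in L) || (x \in R) = (x \in iota 1 n).
  rewrite HL HR; case xs: (x \in s) => /=; last by rewrite andbT.
  by rewrite mem_iota; have := Hsb x xs; move=> /andP[u v]; apply/esym/andP; split; lia.
have HD y : y \in L -> y \notin R.
  move=> yL. rewrite HR -HL yL andbF. done.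
have Hn1 : 1 <= n by rewrite /n /k /=; lia.
have HnR : n \in R.
  rewrite HR mem_iota; apply/andP; split; first by lia.
  by apply/negP => /Hsb; lia.
have H1 : 1 \in L.
  rewrite HL; have -> : 1 = g 0 by rewrite /g /=; lia.
  by apply: map_f; rewrite mem_iota /k /=.
exists L, R; split => //.
  split.
    split.
      by apply/fsetP => x; rewrite in_fsetI in_fset0; case: (boolP (x \in L)) => // /HD /negbTE ->.
    right; exists 1, n; split => //; split => //.
    apply/fsetP => x; rewrite in_fsetU HU in_fset.
    by have -> : (n - 1).+1 = n by lia.
  right; split => //; rewrite (@maxU _ n) // => x; by rewrite in_fsetU.
have Hperm : perm_eq s (enum_fset L).
  apply: uniq_perm; [exact: Hsu | exact: fset_uniq | by move=> x; rewrite memE HL].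
have [K1 K2] := key _ _ _ _ Hperm Hsle HU HD HnR.
rewrite Hsz in K1 K2.
apply: (eq_from_nth (x0 := 0)) => // i Hi; rewrite K1 in Hi.
have := K2 i Hi; rewrite Hns // /g; have := Hla0 i Hi; have := Hla1 i Hi; rewrite /n.
move: (nth 0 la i) (nth 0 (lambdaLR L R) i) => u v. lia.
Qed.

Theorem proposition3p11 (la : seq nat) :
  is_partition la ->
  exists! LR : {fset nat} * {fset nat},
    elementary LR.1 LR.2 /\ lambdaLR LR.1 LR.2 = la.
Proof.
case: la => [|a t] Hp.
  exists (fset0, fset0); split.
    split; last exact: lam0.
    split; last by left.
    split; first by apply/fsetP => x; rewrite in_fsetI in_fset0.
    by left; apply/fsetP => x; rewrite in_fsetU in_fset0.
  move=> [L R] /= [He Hl].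
  case: (He) => [_ [[-> ->]//|[H1 _]]].
  have [n [[HU HD HnR Hn] [Hb Hsz Hs0]]] := data _ _ He H1.
  have Hss : sorted leq (sort leq (enum_fset L)) by apply: sort_sorted; exact: leq_total.
  have [K1 _] := key _ _ _ _ (permEl (perm_sort leq _)) Hss HU HD HnR.
  by move: Hsz; rewrite -K1 Hl.
have [L [R [He H1 Hl]]] := exist_ne _ _ Hp.
exists (L, R); split => //.
move=> [L' R'] /= [He' Hl'].
case: (He') => [_ [[L0 R0]|[H1' _]]].
  by move: Hl'; rewrite L0 lam0.
have [-> ->] := uniq_ne _ _ _ _ He He' H1 H1' (etrans Hl (esym Hl')).
by [].
Qed.
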